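(* Let $\kappa_1\le\kappa_2$ be infinite regular cardinals and suppose a $(\kappa_1,\kappa_2)$-peculiar cut in ${}^\omega\omega$ exists. Then there are a $\sigma$-centered forcing notion $\mathbb Q$ of cardinality $\kappa_1$ and a family of $\kappa_2$ open dense subsets of $\mathbb Q$ such that no directed subset $G\subseteq\mathbb Q$ meets all of them. Consequently $\mathbf{MA}_{\kappa_2}(\sigma\text{-centered})$ fails, and $\mathfrak p\le\kappa_2$.
   Context: For $f,g\in{}^\omega\omega$: $f\le^*g$ iff $f(n)\le g(n)$ for all but finitely many $n$; $f<^*g$ iff $f(n)<g(n)$ for all but finitely many $n$. For infinite regular cardinals $\kappa_1,\kappa_2$, a $(\kappa_1,\kappa_2)$-peculiar cut in ${}^\omega\omega$ is a pair $(\langle f_i:i<\kappa_1\rangle,\langle f^\alpha:\alpha<\kappa_2\rangle)$ of sequences in ${}^\omega\omega$ such that: ($\alpha$) $f_j<^*f_i$ for $i<j<\kappa_1$; ($\beta$) $f^\alpha<^*f^\beta$ for $\alpha<\beta<\kappa_2$; ($\gamma$) $f^\alpha<^*f_i$ for all $i<\kappa_1$, $\alpha<\kappa_2$; ($\delta$) if $f\in{}^\omega\omega$ and $f\le^*f_i$ for all $i<\kappa_1$, then $f\le^*f^\alpha$ for some $\alpha<\kappa_2$; ($\varepsilon$) if $f\in{}^\omega\omega$ and $f^\alpha\le^*f$ for all $\alpha<\kappa_2$, then $f_i\le^*f$ for some $i<\kappa_1$. A forcing notion is $\sigma$-centered if it is a countable union of centered sets (sets any finitely many elements of which have a common upper bound).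 $\mathbf{MA}_\mu(\sigma\text{-centered})$ says: for every $\sigma$-centered forcing and every family of $\mu$ dense sets there is a directed set meeting all of them. $\mathfrak p$ is the least cardinality of a family $\mathcal B$ of infinite subsets of $\omega$ all of whose finite subfamilies have infinite intersection but with no infinite $A\subseteq\omega$ such that $A\setminus B$ is finite for all $B\in\mathcal B$. *)

(* Defs.v *)
From Stdlib Require Import Arith List.
Import ListNotations.

Definition injective {A B : Type} (f : A -> B) : Prop :=
  forall x y, f x = f y -> x = y.
Definition bijective {A B : Type} (f : A -> B) : Prop :=
  injective f /\ forall y, exists x, f x = y.

Definition card_le (A B : Type) : Prop := exists f : A -> B, injective f.

Definition strict_wellorder {K : Type} (lt : K -> K -> Prop) : Prop :=
  (forall x, ~ lt x x) /\
  (forall x y z, lt x y -> lt y z -> lt x z) /\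
  (forall x y, lt x y \/ x = y \/ lt y x) /\
  well_founded lt.

(* (K, lt) is an infinite regular cardinal, viewed as its initial ordinal:
   - lt is a well-order,
   - every proper initial segment has strictly smaller cardinality,
   - K is infinite,
   - every unbounded subset of K has cardinality |K| (cf = kappa). *)
Definition infinite_regular_cardinal {K : Type} (lt : K -> K -> Prop) : Prop :=
  strict_wellorder lt /\
  (forall x : K, ~ card_le K {y : K | lt y x}) /\
  (exists f : nat -> K, injective f) /\
  (forall S : K -> Prop, (forall x, exists y, S y /\ lt x y) ->
     card_le K {y : K | S y}).

Definition le_star (f g : nat -> nat) : Prop :=
  exists N, forall n, N <= n -> f n <= g n.
Definition lt_star (f g : nat -> nat) : Prop :=
  exists N, forall n, N <= n -> f n < g n.

Definition peculiar_cut {K1 K2 : Type} (lt1 : K1 -> K1 -> Prop)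
  (lt2 : K2 -> K2 -> Prop) (fl : K1 -> nat -> nat) (fu : K2 -> nat -> nat)
  : Prop :=
  (forall i j, lt1 i j -> lt_star (fl j) (fl i)) /\
  (forall a b, lt2 a b -> lt_star (fu a) (fu b)) /\
  (forall i a, lt_star (fu a) (fl i)) /\
  (forall f, (forall i, le_star f (fl i)) -> exists a, le_star f (fu a)) /\
  (forall f, (forall a, le_star (fu a) f) -> exists i, le_star (fl i) f).

(* a forcing notion: a nonempty preorder; [le p q] means q is stronger
   (upper bounds = common extensions, as in the paper). *)
Definition forcing_notion {Q : Type} (le : Q -> Q -> Prop) : Prop :=
  inhabited Q /\ (forall p, le p p) /\
  (forall p q r, le p q -> le q r -> le p r).

Definition centered {Q : Type} (le : Q -> Q -> Prop) (C : Q -> Prop) : Prop :=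
  forall s : list Q, (forall p, In p s -> C p) ->
    exists r, forall p, In p s -> le p r.

Definition sigma_centered {Q : Type} (le : Q -> Q -> Prop) : Prop :=
  exists C : nat -> (Q -> Prop),
    (forall n, centered le (C n)) /\ (forall p, exists n, C n p).

Definition dense {Q : Type} (le : Q -> Q -> Prop) (D : Q -> Prop) : Prop :=
  forall p, exists q, le p q /\ D q.
Definition open_set {Q : Type} (le : Q -> Q -> Prop) (D : Q -> Prop) : Prop :=
  forall p q, D p -> le p q -> D q.
Definition directed {Q : Type} (le : Q -> Q -> Prop) (G : Q -> Prop) : Prop :=
  forall p q, G p -> G q -> exists r, G r /\ le p r /\ le q r.
Definition meets {Q : Type} (G D : Q -> Prop) : Prop :=
  exists p, G p /\ D p.

Definition MA_sigma_centered (M : Type) : Prop :=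
  forall (Q : Type) (le : Q -> Q -> Prop),
    forcing_notion le -> sigma_centered le ->
    forall D : M -> (Q -> Prop), (forall m, dense le (D m)) ->
    exists G : Q -> Prop, directed le G /\ forall m, meets G (D m).

Definition infinite_set (A : nat -> Prop) : Prop :=
  forall n, exists m, n <= m /\ A m.
Definition almost_subset (A B : nat -> Prop) : Prop :=
  exists N, forall m, N <= m -> A m -> B m.

Definition p_le (M : Type) : Prop :=
  exists B : M -> (nat -> Prop),
    (forall m, infinite_set (B m)) /\
    (forall s : list M, infinite_set (fun n => forall m, In m s -> B m n)) /\
    ~ (exists A, infinite_set A /\ forall m, almost_subset A (B m)).

(* Main.v *)
Require Import Defs.
From Stdlib Require Import Arith List Lia Cantor ClassicalEpsilon Classical.
Import ListNotations.

Definition cid := constructive_indefinite_description.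
Definition emi := excluded_middle_informative.

Lemma no_max {K : Type} (lt : K -> K -> Prop) :
  infinite_regular_cardinal lt -> forall x, exists y, lt x y.
Proof.
  intros [[irr [tr [tot wf]]] [seg [[f finj] _]]] x.
  apply NNPP; intro H.
  assert (Hlt : forall y, y <> x -> lt y x).
  { intros y Hy. destruct (tot y x) as [h|[h|h]]; auto; try contradiction.
    exfalso; apply H; eauto. }
  set (h := fun y : K => match emi (exists n, f n = y) with
                | left Hy => f (S (proj1_sig (cid _ _ Hy)))
                | right _ => y end).
  assert (hinj : injective h).
  { intros a b. unfold h.
    destruct (emi (exists n, f n = a)) as [Ha|Ha];
    destruct (emi (exists n, f n = b)) as [Hb|Hb].
    - destruct (cid _ _ Ha) as [na ea]; destruct (cid _ _ Hb) as [nb eb]; simpl.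
      intro E; apply finj in E; subst; congruence.
    - destruct (cid _ _ Ha) as [na ea]; simpl. intro E. exfalso; apply Hb; eauto.
    - destruct (cid _ _ Hb) as [nb eb]; simpl. intro E. exfalso; apply Ha; eauto.
    - auto. }
  assert (hne : forall y, h y <> f 0).
  { intros y. unfold h. destruct (emi (exists n, f n = y)) as [Hy|Hy].
    - destruct (cid _ _ Hy); simpl. intro E; apply finj in E; discriminate.
    - intro E; apply Hy; eauto. }
  set (sw := fun z : K => match emi (z = x) with
                | left _ => f 0
                | right _ => match emi (z = f 0) with left _ => x | right _ => z end end).
  assert (swinj : injective sw).
  { intros a b; unfold sw.
    destruct (emi (a = x)); destruct (emi (b = x)); destruct (emi (a = f 0));
    destruct (emi (b = f 0)); intros; subst; congruence. }
  assert (swne : forall z, z <> f 0 -> sw z <> x).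
  { intros z hz; unfold sw. destruct (emi (z = x)).
    - intro E. subst. apply hz. auto.
    - destruct (emi (z = f 0)); congruence. }
  apply (seg x).
  exists (fun y => exist _ (sw (h y)) (Hlt _ (swne _ (hne y)))).
  intros a b E. apply (f_equal (@proj1_sig _ _)) in E. simpl in E.
  apply hinj, swinj, E.
Qed.

Lemma wf_min {K : Type} (lt : K -> K -> Prop) : well_founded lt ->
  forall P : K -> Prop, (exists x, P x) -> exists x, P x /\ forall y, P y -> ~ lt y x.
Proof.
  intros wf P [x Px]. revert Px. induction (wf x) as [x _ IH]. intros Px.
  destruct (classic (exists y, P y /\ lt y x)) as [[y [Py ly]]|N].
  - eapply IH; eauto.
  - exists x; split; auto. intros y Py ly; apply N; eauto.
Qed.

Definition Succ {K : Type} (lt : K -> K -> Prop) (reg : infinite_regular_cardinal lt)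
  (x : K) : K :=
  proj1_sig (cid _ _ (wf_min lt (proj2 (proj2 (proj2 (proj1 reg)))) _ (no_max lt reg x))).

Lemma Succ_spec {K : Type} (lt : K -> K -> Prop) (reg : infinite_regular_cardinal lt) x :
  lt x (Succ lt reg x) /\ forall z, lt x z -> ~ lt z (Succ lt reg x).
Proof. unfold Succ. destruct cid; simpl. exact a. Qed.

Lemma Succ_inj {K : Type} (lt : K -> K -> Prop) (reg : infinite_regular_cardinal lt) a b :
  Succ lt reg a = Succ lt reg b -> a = b.
Proof.
  intro E. pose proof reg as [[irr [tr [tot wf]]] _].
  destruct (Succ_spec lt reg a) as [la ma]; destruct (Succ_spec lt reg b) as [lb mb].
  destruct (tot a b) as [h|[h|h]]; auto; exfalso.
  - destruct (tot b (Succ lt reg a)) as [h2|[h2|h2]].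
    + apply (ma b h). exact h2.
    + rewrite E in h2. apply (irr b). rewrite h2 at 2. exact lb.
    + rewrite E in h2. apply (irr b). eauto.
  - destruct (tot a (Succ lt reg b)) as [h2|[h2|h2]].
    + apply (mb a h). exact h2.
    + rewrite <- E in h2. apply (irr a). rewrite h2 at 2. exact la.
    + rewrite <- E in h2. apply (irr a). eauto.
Qed.

Definition addK {K : Type} (lt : K -> K -> Prop) (reg : infinite_regular_cardinal lt)
  (l : K) (n : nat) : K := Nat.iter n (Succ lt reg) l.

Definition limitK {K : Type} (lt : K -> K -> Prop) (reg : infinite_regular_cardinal lt)
  (l : K) : Prop := forall z, Succ lt reg z <> l.

Lemma decomp {K : Type} (lt : K -> K -> Prop) (reg : infinite_regular_cardinal lt) y :
  exists l n, limitK lt reg l /\ addK lt reg l n = y.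
Proof.
  pose proof reg as [[irr [tr [tot wf]]] _].
  induction (wf y) as [y _ IH].
  destruct (classic (limitK lt reg y)) as [L|L].
  - exists y, 0; auto.
  - unfold limitK in L. apply not_all_ex_not in L as [z Hz]. apply NNPP in Hz.
    destruct (IH z) as [l [n [Hl Hn]]].
    + rewrite <- Hz. apply Succ_spec.
    + exists l, (S n); split; auto. unfold addK in *. simpl. rewrite Hn. auto.
Qed.

Lemma decomp_uniq {K : Type} (lt : K -> K -> Prop) (reg : infinite_regular_cardinal lt)
  l l' n n' : limitK lt reg l -> limitK lt reg l' ->
  addK lt reg l n = addK lt reg l' n' -> l = l' /\ n = n'.
Proof.
  intros Hl Hl'. revert n'. induction n as [|n IH]; intros [|n'] E; unfold addK in *; simpl in *.
  - auto.
  - exfalso; apply (Hl _ (eq_sym E)).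
  - exfalso; apply (Hl' _ E).
  - apply Succ_inj in E. destruct (IH _ E); auto.
Qed.

Lemma surj_nat_prod {K : Type} (lt : K -> K -> Prop) (reg : infinite_regular_cardinal lt) :
  exists phi : K -> nat * K, forall p, exists x, phi x = p.
Proof.
  exists (fun x => let d := cid _ _ (decomp lt reg x) in
           let l := proj1_sig d in
           let n := proj1_sig (cid _ _ (proj2_sig d)) in
           (fst (of_nat n), addK lt reg l (snd (of_nat n)))).
  intros [a y]. destruct (decomp lt reg y) as [l [m [Hl Hm]]].
  assert (C : of_nat (to_nat (a, m)) = (a, m)) by apply cancel_of_to.
  set (t := to_nat (a, m)) in *. clearbody t.
  exists (addK lt reg l t). simpl.
  destruct (cid _ _ (decomp lt reg _)) as [l' Hd]; simpl.
  destruct (cid _ _ Hd) as [n' [Hl' Hn']]; simpl.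
  destruct (decomp_uniq lt reg _ _ _ _ Hl' Hl Hn') as [-> ->].
  rewrite C. simpl. congruence.
Qed.

Lemma le_star_refl f : le_star f f.
Proof. exists 0; auto. Qed.
Lemma le_star_trans f g h : le_star f g -> le_star g h -> le_star f h.
Proof. intros [N1 H1] [N2 H2]; exists (N1 + N2); intros n Hn.
  specialize (H1 n ltac:(lia)); specialize (H2 n ltac:(lia)); lia. Qed.
Lemma lt_le_star f g : lt_star f g -> le_star f g.
Proof. intros [N H]; exists N; intros n Hn; specialize (H n Hn); lia. Qed.

Lemma ev_list {X : Type} (P : X -> nat -> Prop) :
  (forall x, exists N, forall n, N <= n -> P x n) ->
  forall s, exists N, forall n, N <= n -> forall x, In x s -> P x n.
Proof.
  intros H s; induction s as [|a s [N IH]].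
  - exists 0; intros n _ x [].
  - destruct (H a) as [M HM]. exists (N + M). intros n Hn x [<-|Hx].
    + apply HM; lia.
    + apply IH; auto; lia.
Qed.

Lemma max_list {K : Type} (lt : K -> K -> Prop) (fl : K -> nat -> nat) (i0 : K) :
  (forall x y, lt x y \/ x = y \/ lt y x) ->
  (forall i j, lt i j -> lt_star (fl j) (fl i)) ->
  forall l, exists j, forall i, In i l -> le_star (fl j) (fl i).
Proof.
  intros tot dec l; induction l as [|a l [j IH]].
  - exists i0; intros i [].
  - destruct (tot a j) as [h|[h|h]].
    + exists j; intros i [<-|Hi]; auto. apply lt_le_star, dec, h.
    + subst; exists j; intros i [<-|Hi]; auto using le_star_refl.
    + exists a; intros i [<-|Hi]; auto using le_star_refl.
      eapply le_star_trans; [apply lt_le_star, dec, h|auto].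
Qed.

Lemma nth_repeat0 k L : nth k (repeat 0 L) 0 = 0.
Proof. revert k; induction L; intros [|k]; simpl; auto. Qed.

Lemma nth_pad s L n : length s <= n -> nth n (s ++ repeat 0 L) 0 = 0.
Proof. intro H. rewrite app_nth2 by lia. apply nth_repeat0. Qed.

Definition pleP {K1 : Type} (fl : K1 -> nat -> nat) (p q : list nat * K1) : Prop :=
  (exists r, fst q = fst p ++ r) /\
  (forall n, length (fst p) <= n < length (fst q) -> nth n (fst q) 0 <= fl (snd p) n) /\
  (forall n, length (fst q) <= n -> fl (snd q) n <= fl (snd p) n).

Lemma pleP_len {K1} fl (p q : list nat * K1) : pleP fl p q -> length (fst p) <= length (fst q).
Proof. intros [[r E] _]. rewrite E, length_app. lia. Qed.

Lemma pleP_nth {K1} fl (p q : list nat * K1) n : pleP fl p q -> n < length (fst p) ->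
  nth n (fst q) 0 = nth n (fst p) 0.
Proof. intros [[r E] _] H. rewrite E. apply app_nth1; auto. Qed.

Lemma pleP_refl {K1} fl (p : list nat * K1) : pleP fl p p.
Proof. split; [exists []; rewrite app_nil_r; auto|split; intros; lia]. Qed.

Lemma pleP_trans {K1} fl (p q r : list nat * K1) : pleP fl p q -> pleP fl q r -> pleP fl p r.
Proof.
  intros Hpq Hqr. pose proof Hqr as Hqr0. pose proof (pleP_len _ _ _ Hpq) as L1. pose proof (pleP_len _ _ _ Hqr) as L2.
  destruct Hpq as [[r1 E1] [A1 B1]]. destruct Hqr as [[r2 E2] [A2 B2]].
  split; [|split].
  - exists (r1 ++ r2). rewrite E2, E1, app_assoc; auto.
  - intros n Hn. destruct (Nat.lt_ge_cases n (length (fst q))).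
    + rewrite (pleP_nth fl q r) by auto. apply A1; lia.
    + eapply Nat.le_trans; [apply A2; lia|apply B1; lia].
  - intros n Hn. eapply Nat.le_trans; [apply B2; lia|apply B1; lia].
Qed.

Lemma pleP_ext {K1} (fl : K1 -> nat -> nat) s i j L :
  (forall n, length s + L <= n -> fl j n <= fl i n) -> pleP fl (s, i) (s ++ repeat 0 L, j).
Proof.
  intro H. split; [|split]; simpl.
  - eauto.
  - intros n Hn. rewrite nth_pad by lia. lia.
  - intros n Hn. apply H. rewrite length_app, repeat_length in Hn. lia.
Qed.

Definition EP {K1 : Type} (fl : K1 -> nat -> nat) (i : K1) (p : list nat * K1) : Prop :=
  forall n, length (fst p) <= n -> fl (snd p) n <= fl i n.
Definition FP {K1 K2 : Type} (fu : K2 -> nat -> nat) (a : K2) (N : nat) (p : list nat * K1) : Prop :=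
  exists n, N <= n < length (fst p) /\ fu a n < nth n (fst p) 0.

Lemma EP_open {K1} fl i (p q : list nat * K1) : EP fl i p -> pleP fl p q -> EP fl i q.
Proof.
  intros H Hpq. pose proof (pleP_len _ _ _ Hpq). destruct Hpq as [_ [_ B]].
  intros n Hn. eapply Nat.le_trans; [apply B; lia|apply H; lia].
Qed.

Lemma FP_open {K1 K2} fl (fu : K2 -> nat -> nat) a N (p q : list nat * K1) :
  FP fu a N p -> pleP fl p q -> FP fu a N q.
Proof.
  intros [n [Hn Hv]] Hpq. pose proof (pleP_len _ _ _ Hpq). exists n; split; [lia|].
  rewrite (pleP_nth fl p q) by (auto; lia). auto.
Qed.

Lemma EP_dense {K1} (lt1 : K1 -> K1 -> Prop) fl :
  (forall x y, lt1 x y \/ x = y \/ lt1 y x) ->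
  (forall i j, lt1 i j -> lt_star (fl j) (fl i)) ->
  forall i (p : list nat * K1), exists q, pleP fl p q /\ EP fl i q.
Proof.
  intros tot dec i [s j].
  destruct (max_list lt1 fl i tot dec [i; j]) as [k Hk].
  destruct (Hk i ltac:(simpl; auto)) as [N1 H1]. destruct (Hk j ltac:(simpl; auto)) as [N2 H2].
  exists (s ++ repeat 0 (N1 + N2), k). split.
  - apply pleP_ext. intros n Hn; apply H2; lia.
  - intros n Hn. simpl in *. rewrite length_app, repeat_length in Hn. apply H1; lia.
Qed.

Lemma FP_dense {K1 K2} (fl : K1 -> nat -> nat) (fu : K2 -> nat -> nat) :
  (forall i a, lt_star (fu a) (fl i)) ->
  forall a N (p : list nat * K1), exists q, pleP fl p q /\ FP fu a N q.
Proof.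
  intros cg a N [s j]. destruct (cg j a) as [M HM].
  set (n := N + M + length s).
  set (u := s ++ repeat 0 (n - length s)).
  assert (Lu : length u = n) by (unfold u; rewrite length_app, repeat_length; lia).
  exists (u ++ [fl j n], j). simpl.
  assert (Hn : nth n (u ++ [fl j n]) 0 = fl j n).
  { rewrite app_nth2 by lia. rewrite Lu, Nat.sub_diag. reflexivity. }
  assert (Lt : length (u ++ [fl j n]) = S n) by (rewrite length_app, Lu; simpl; lia).
  split; [split; [|split]|]; simpl.
  - exists (repeat 0 (n - length s) ++ [fl j n]). unfold u. rewrite app_assoc; auto.
  - intros m Hm. rewrite Lt in Hm. destruct (Nat.eq_dec m n) as [->|ne].
    + rewrite Hn; lia.
    + rewrite app_nth1 by lia. unfold u. rewrite nth_pad by lia. lia.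
  - lia.
  - exists n. simpl. rewrite Lt, Hn. split; [lia|]. apply HM. lia.
Qed.

Lemma ev_list_in {X : Type} (P : X -> nat -> Prop) s :
  (forall x, In x s -> exists N, forall n, N <= n -> P x n) ->
  exists N, forall n, N <= n -> forall x, In x s -> P x n.
Proof.
  induction s as [|a s IH]; intros H.
  - exists 0; intros n _ x [].
  - destruct (H a (or_introl eq_refl)) as [M HM].
    destruct IH as [N HN]. { intros; apply H; right; auto. }
    exists (N + M). intros n Hn x [<-|Hx].
    + apply HM; lia.
    + apply HN; auto; lia.
Qed.

Lemma P_centered {K1} (lt1 : K1 -> K1 -> Prop) fl (i0 : K1) :
  (forall x y, lt1 x y \/ x = y \/ lt1 y x) ->
  (forall i j, lt1 i j -> lt_star (fl j) (fl i)) ->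
  forall s, centered (pleP fl) (fun p => fst p = s).
Proof.
  intros tot dec s l Hl.
  destruct (max_list lt1 fl i0 tot dec (map snd l)) as [k Hk].
  destruct (ev_list_in (fun i n => fl k n <= fl i n) (map snd l)) as [N HN].
  { intros i Hi. destruct (Hk _ Hi) as [N HN]; eauto. }
  exists (s ++ repeat 0 N, k). intros [t i] Hp.
  pose proof (Hl _ Hp) as E. simpl in E. subst t.
  apply pleP_ext. intros n Hn. apply HN; [lia|].
  change i with (snd (s, i)). apply in_map; auto.
Qed.

Lemma no_generic {K1 K2 : Type} (fl : K1 -> nat -> nat) (fu : K2 -> nat -> nat)
  (c : K2 -> K1) (phi : K2 -> nat * K2) (a0 : K2) :
  (forall i, exists b, c b = i) -> (forall p, exists b, phi b = p) ->
  (forall f, (forall i, le_star f (fl i)) -> exists a, le_star f (fu a)) ->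
  forall G, directed (pleP fl) G ->
  (forall b, meets G (fun p => EP fl (c b) p /\ FP fu (snd (phi b)) (fst (phi b)) p)) -> False.
Proof.
  intros csurj phisurj delta G dir meet.
  assert (long : forall n, exists p, G p /\ n < length (fst p)).
  { intro n. destruct (phisurj (S n, a0)) as [b Hb].
    destruct (meet b) as [p [Gp [_ [m [Hm _]]]]]. rewrite Hb in Hm. simpl in Hm.
    exists p; split; auto; lia. }
  assert (compat : forall p q n, G p -> G q -> n < length (fst p) -> n < length (fst q) ->
            nth n (fst p) 0 = nth n (fst q) 0).
  { intros p q n Gp Gq Lp Lq. destruct (dir p q Gp Gq) as [r [Gr [Hpr Hqr]]].
    rewrite <- (pleP_nth fl p r n Hpr Lp). rewrite <- (pleP_nth fl q r n Hqr Lq). auto. }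
  set (g := fun n => nth n (fst (proj1_sig (cid _ _ (long n)))) 0).
  assert (gspec : forall p n, G p -> n < length (fst p) -> g n = nth n (fst p) 0).
  { intros p n Gp Lp. unfold g. destruct (cid _ _ (long n)) as [q [Gq Lq]]; simpl.
    apply compat; auto. }
  assert (below : forall i, le_star g (fl i)).
  { intro i. destruct (csurj i) as [b Hb].
    destruct (meet b) as [p [Gp [HE _]]]. rewrite Hb in HE.
    exists (length (fst p)). intros n Hn.
    destruct (long n) as [q [Gq Lq]]. destruct (dir p q Gp Gq) as [r [Gr [Hpr Hqr]]].
    pose proof (pleP_len _ _ _ Hqr).
    rewrite (gspec r n Gr ltac:(lia)).
    destruct Hpr as [_ [A _]]. eapply Nat.le_trans; [apply A; lia|]. apply HE; auto. }
  destruct (delta g below) as [a [N HN]].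
  destruct (phisurj (N, a)) as [b Hb]. destruct (meet b) as [p [Gp [_ [m [Hm Hv]]]]].
  rewrite Hb in Hm, Hv. simpl in Hm, Hv.
  rewrite <- (gspec p m Gp ltac:(lia)) in Hv. specialize (HN m ltac:(lia)). lia.
Qed.

Fixpoint sumto (f : nat -> nat) (C : nat) : nat :=
  match C with 0 => 0 | S C => f C + sumto f C end.
Lemma sumto_ge f C n : n < C -> f n <= sumto f C.
Proof. induction C; simpl; intros H; [lia|]. destruct (Nat.eq_dec n C); subst; [lia|].
  specialize (IHC ltac:(lia)); lia. Qed.

Lemma col_le k : fst (of_nat k) <= k.
Proof. rewrite <- (cancel_to_of k) at 2. destruct (of_nat k) as [x y]. cbn [fst].
  pose proof (to_nat_non_decreasing x y); lia. Qed.

Lemma code_bound n m C Mx : n < C -> m <= Mx -> to_nat (n, m) < (C + Mx + 1) * (C + Mx + 1).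
Proof.
  intros H1 H2. pose proof (to_nat_spec n m) as E.
  assert (m + n <= C + Mx) by lia.
  assert ((m + n) * S (m + n) <= (C + Mx) * S (C + Mx)) by (apply Nat.mul_le_mono; lia).
  nia.
Qed.

Definition mx {K2} (fu : K2 -> nat -> nat) (s : list K2) n :=
  fold_right (fun b acc => Nat.max (fu b n) acc) 0 s.
Lemma mx_ge {K2} fu (s : list K2) n g : In g s -> fu g n <= mx fu s n.
Proof. induction s as [|a s IH]; simpl; [tauto|]. intros [<-|H]; [lia|]. specialize (IH H); lia. Qed.
Lemma mx_lt {K2} fu (s : list K2) n X : (forall g, In g s -> fu g n < X) -> 0 < X -> mx fu s n < X.
Proof. induction s as [|a s IH]; simpl; intros H H0; [lia|].
  assert (fu a n < X) by auto. assert (mx fu s n < X) by (apply IH; auto). lia. Qed.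

Lemma p_part {K1 K2 : Type} (lt1 : K1 -> K1 -> Prop) (reg1 : infinite_regular_cardinal lt1)
  (fl : K1 -> nat -> nat) (fu : K2 -> nat -> nat) (c : K2 -> K1) (i0 : K1) :
  (forall i, exists b, c b = i) ->
  (forall i j, lt1 i j -> lt_star (fl j) (fl i)) ->
  (forall i a, lt_star (fu a) (fl i)) ->
  (forall f, (forall a, le_star (fu a) f) -> exists i, le_star (fl i) f) ->
  p_le K2.
Proof.
  intros csurj dec cg eps.
  set (B := fun b k => fu b (fst (of_nat k)) < snd (of_nat k) /\
                       snd (of_nat k) <= fl (c b) (fst (of_nat k))).
  assert (fin : forall s : list K2, infinite_set (fun n => forall m, In m s -> B m n)).
  { intros s n0.
    destruct (ev_list_in (fun b n => forall g, In g s -> fu g n < fl (c b) n) s) as [N HN].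
    { intros b _. apply ev_list_in. intros g _. destruct (cg (c b) g) as [M HM]; exists M; auto. }
    set (n := n0 + N). set (m := mx fu s n + 1). exists (to_nat (n, m)). split.
    - pose proof (to_nat_non_decreasing n m); lia.
    - intros b Hb. unfold B. rewrite cancel_of_to. cbn [fst snd]. split.
      + pose proof (mx_ge fu s n b Hb); lia.
      + assert (mx fu s n < fl (c b) n); [|lia].
        apply mx_lt.
        * intros g Hg; apply HN; auto; lia.
        * specialize (HN n ltac:(lia) b Hb b Hb); lia. }
  exists B. split; [|split].
  - intros b n0. destruct (fin [b] n0) as [k [Hk Hb]]. exists k; split; auto. apply Hb; simpl; auto.
  - exact fin.
  - intros [A [Ainf Asub]].
    set (colA := fun n => exists k, A k /\ fst (of_nat k) = n).
    set (g := fun n => match emi (colA n) with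
                       | left H => snd (of_nat (proj1_sig (cid _ _ H)))
                       | right _ => fl i0 n end).
    assert (gspec : forall n, colA n -> exists k, A k /\ fst (of_nat k) = n /\ g n = snd (of_nat k)).
    { intros n H. unfold g. destruct (emi (colA n)) as [H'|H']; [|contradiction].
      destruct (cid _ _ H') as [k [Ak Ek]]; simpl. eauto. }
    assert (gspec2 : forall n, ~ colA n -> g n = fl i0 n).
    { intros n H. unfold g. destruct (emi (colA n)); [contradiction|auto]. }
    assert (above : forall a, le_star (fu a) g).
    { intros a. destruct (Asub a) as [N HN]. destruct (cg i0 a) as [M HM].
      exists (N + M). intros n Hn. destruct (classic (colA n)) as [H|H].
      - destruct (gspec n H) as [k [Ak [Ek Eg]]].
        pose proof (col_le k).
        destruct (HN k ltac:(lia) Ak) as [B1 _]. rewrite Ek in B1. lia.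
      - rewrite gspec2 by auto. specialize (HM n ltac:(lia)). lia. }
    destruct (eps g above) as [i [P HP]].
    destruct (no_max lt1 reg1 i) as [j Hij].
    destruct (dec i j Hij) as [R HR].
    destruct (csurj j) as [b Hb]. destruct (Asub b) as [N HN].
    set (C := P + R + N + 1). set (Mx := sumto (fl j) C).
    destruct (Ainf ((C + Mx + 1) * (C + Mx + 1) + N)) as [k [Hk Ak]].
    destruct (HN k ltac:(lia) Ak) as [B1 B2]. rewrite Hb in B2.
    destruct (Nat.lt_ge_cases (fst (of_nat k)) C) as [Hc|Hc].
    + pose proof (sumto_ge (fl j) C _ Hc).
      pose proof (code_bound (fst (of_nat k)) (snd (of_nat k)) C Mx Hc ltac:(unfold Mx; lia)).
      rewrite <- surjective_pairing, cancel_to_of in H0. lia.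
    + destruct (gspec (fst (of_nat k)) ltac:(exists k; auto)) as [k' [Ak' [Ek' Eg]]].
      pose proof (col_le k').
      destruct (HN k' ltac:(lia) Ak') as [_ B3]. rewrite Hb, Ek' in B3.
      specialize (HR (fst (of_nat k)) ltac:(lia)). specialize (HP (fst (of_nat k)) ltac:(lia)).
      lia.
Qed.

Fixpoint encL (s : list nat) : nat :=
  match s with [] => 0 | a :: s => S (to_nat (a, encL s)) end.
Lemma encL_inj s t : encL s = encL t -> s = t.
Proof.
  revert t; induction s as [|a s IH]; intros [|b t]; cbn [encL]; try discriminate; auto.
  intro E. assert (E2 : to_nat (a, encL s) = to_nat (b, encL t)) by (apply Nat.succ_inj; exact E).
  apply to_nat_inj in E2. injection E2 as -> E2. f_equal; auto.
Qed.
Definition decL (n : nat) : list nat :=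
  match emi (exists t, encL t = n) with
  | left H => proj1_sig (cid _ _ H) | right _ => [] end.
Lemma decL_encL s : decL (encL s) = s.
Proof. unfold decL. destruct (emi _) as [H|H].
  - destruct (cid _ _ H); simpl. apply encL_inj; auto.
  - exfalso; eauto. Qed.

Theorem proposition3p1 (K1 K2 : Type) (lt1 : K1 -> K1 -> Prop)
  (lt2 : K2 -> K2 -> Prop)
  (reg1 : infinite_regular_cardinal lt1)
  (reg2 : infinite_regular_cardinal lt2)
  (k1_le_k2 : card_le K1 K2)
  (cut : exists (fl : K1 -> nat -> nat) (fu : K2 -> nat -> nat),
           peculiar_cut lt1 lt2 fl fu) :
  (exists (Q : Type) (le : Q -> Q -> Prop),
      forcing_notion le /\ sigma_centered le /\
      (exists e : Q -> K1, bijective e) /\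
      exists D : K2 -> (Q -> Prop),
        (forall a, open_set le (D a) /\ dense le (D a)) /\
        ~ (exists G : Q -> Prop, directed le G /\ forall a, meets G (D a)))
  /\ ~ MA_sigma_centered K2
  /\ p_le K2.
Proof.
  destruct cut as [fl [fu [cdec [_ [cg [delta eps]]]]]].
  pose proof reg1 as [[_ [_ [tot1 _]]] [_ [[f1 _] _]]].
  pose proof reg2 as [_ [_ [[f2 _] _]]].
  set (i0 := f1 0). set (a0 := f2 0).
  destruct k1_le_k2 as [e einj].
  set (c := fun b => match emi (exists i, e i = b) with
                     | left H => proj1_sig (cid _ _ H) | right _ => i0 end).
  assert (csurj : forall i, exists b, c b = i).
  { intro i. exists (e i). unfold c. destruct (emi _) as [H|H].
    - destruct (cid _ _ H); simpl. apply einj; auto.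
    - exfalso; eauto. }
  destruct (surj_nat_prod lt2 reg2) as [phi2 phi2s].
  destruct (surj_nat_prod lt1 reg1) as [phi1 phi1s].
  set (rho := fun x => (decL (fst (phi1 x)), snd (phi1 x))).
  assert (rhos : forall p, exists x, rho x = p).
  { intros [s i]. destruct (phi1s (encL s, i)) as [x Hx]. exists x. unfold rho.
    rewrite Hx. simpl. rewrite decL_encL. auto. }
  set (DP := fun b p => EP fl (c b) p /\ FP fu (snd (phi2 b)) (fst (phi2 b)) p).
  assert (Hforce : exists (Q : Type) (le : Q -> Q -> Prop),
      forcing_notion le /\ sigma_centered le /\
      (exists e : Q -> K1, bijective e) /\
      exists D : K2 -> (Q -> Prop),
        (forall a, open_set le (D a) /\ dense le (D a)) /\
        ~ (exists G : Q -> Prop, directed le G /\ forall a, meets G (D a))).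
  { exists K1, (fun x y => pleP fl (rho x) (rho y)). split; [|split; [|split]].
    - split; [constructor; exact i0|split].
      + intros; apply pleP_refl.
      + intros p q r; apply pleP_trans.
    - exists (fun n x => fst (rho x) = decL n). split.
      + intros n xs Hxs.
        destruct (P_centered lt1 fl i0 tot1 cdec (decL n) (map rho xs)) as [r Hr].
        { intros p Hp. apply in_map_iff in Hp as [x [<- Hx]]. auto. }
        destruct (rhos r) as [y <-]. exists y. intros x Hx. apply Hr, in_map; auto.
      + intros x. exists (encL (fst (rho x))). rewrite decL_encL; auto.
    - exists (fun x => x). split; [intros x y H; auto|intros y; exists y; auto].
    - exists (fun b x => DP b (rho x)). split.
      + intros b. split.
        * intros x y [H1 H2] Hxy. split; [eapply EP_open|eapply FP_open]; eauto.
        * intros x. destruct (EP_dense lt1 fl tot1 cdec (c b) (rho x)) as [q1 [H1 E1]].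
          destruct (FP_dense fl fu cg (snd (phi2 b)) (fst (phi2 b)) q1) as [q2 [H2 F2]].
          destruct (rhos q2) as [y <-]. exists y. split.
          -- eapply pleP_trans; eauto.
          -- split; auto. eapply EP_open; eauto.
      + intros [G [dir meet]].
        apply (no_generic fl fu c phi2 a0 csurj phi2s delta (fun p => exists x, G x /\ rho x = p)).
        * intros p q [x [Gx <-]] [y [Gy <-]]. destruct (dir x y Gx Gy) as [r [Gr [H1 H2]]].
          exists (rho r). split; eauto.
        * intros b. destruct (meet b) as [x [Gx Dx]]. exists (rho x). split; eauto. }
  split; [exact Hforce|split].
  - intro MA. destruct Hforce as [Q [le [Hf [Hs [_ [D [HD HG]]]]]]].
    apply HG. apply MA; auto. intro a; apply HD.
  - exact (p_part lt1 reg1 fl fu c i0 csurj cdec cg eps).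
Qed.
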